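(* Let $\mathbb{X}$ be a reverse differential restriction category with reverse derivative $R$. For each map $f:A\to B$ define $$D[f]:=(\iota_0\times 1_A)\,R[R[f]]\,\pi_1 \;:\; A\times A\to B,$$ where $\iota_0=\langle 1_A,0\rangle:A\to A\times B$, so that $\iota_0\times 1_A:A\times A\to (A\times B)\times A$ and $\pi_1:A\times B\to B$. Then $D$ satisfies the axioms [DR.1]–[DR.9] below, i.e. $(\mathbb{X},D)$ is a differential restriction category.
   Context: Composition is written in diagrammatic order: $fg$ means ''first $f$, then $g$''. A restriction category is a category with an operation sending each $f:A\to B$ to a map $\bar f:A\to A$ such that $\bar f f=f$, $\bar f\bar g=\bar g\bar f$ (for $f,g$ with common domain), $\overline{\bar f g}=\bar f\bar g$, and $f\bar g=\overline{fg}\,f$. A map $f$ is total if $\bar f=1$. For parallel maps, $f\le g$ means $\bar f g=f$; a nowhere-defined map $\emptyset$ is a least element for $\le$. The category has restriction products if: - there is an object $1$ with a total map $!_A:A\to 1$ for each $A$ such that every $f:A\to 1$ equals $\bar f\,!_A$; - for all $A,B$ there is an object $A\times B$ with total maps $\pi_0,\pi_1$ such that for all $f:C\to A$, $g:C\to B$ there is a unique $\langle f,g\rangle:C\to A\times B$ with $\langle f,g\rangle\pi_0=\bar g f$ and $\langle f,g\rangle\pi_1=\bar f g$. Write $f\times g=\langle \pi_0 f,\pi_1 g\rangle$. A Cartesian left additive restriction category is a restriction category with restriction products in which every hom-set is a commutative monoid $(+,0)$ such that: - $\overline{f+g}=\bar f\bar g$ and $\bar 0=1$; - $x(f+g)=xf+xg$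 and $x0=\bar x 0$; - $(f+g)\pi_i=f\pi_i+g\pi_i$ and $0\pi_i=0$. Write $\iota_0=\langle 1,0\rangle:A\to A\times B$ and $\iota_1=\langle 0,1\rangle:B\to A\times B$. A reverse differential restriction category (RDRC) is a Cartesian left additive restriction category with an operation sending each $f:A\to B$ to $R[f]:A\times B\to A$ such that: - [RD.1] $R[f+g]=R[f]+R[g]$ and $R[0]=0$. - [RD.2] $\langle a,b+c\rangle R[f]=\langle a,b\rangle R[f]+\langle a,c\rangle R[f]$ and $\langle a,0\rangle R[f]=\overline{af}\,0$ for all suitable $a,b,c$. - [RD.3] $R[\pi_j]=\pi_1\iota_j$. - [RD.4] $R[\langle f,g\rangle]=(1\times\pi_0)R[f]+(1\times\pi_1)R[g]$. - [RD.5] $R[fg]=\langle \pi_0,\langle\pi_0 f,\pi_1\rangle R[g]\rangle R[f]$. - [RD.6] $\langle 1\times\pi_0,\,0\times\pi_1\rangle(\iota_0\times 1)R[R[R[f]]]\pi_1=(1\times\pi_1)R[f]$. - [RD.7] With $g:=(\iota_0\times 1)R[R[f]]\pi_1$, one has $(\iota_0\times1)R[R[g]]\pi_1=\mathrm{ex}\,(\iota_0\times 1)R[R[g]]\pi_1$, where $\mathrm{ex}=\langle\pi_0\times\pi_0,\pi_1\times\pi_1\rangle:(A\times A)\times(A\times A)\to(A\times A)\times(A\times A)$. - [RD.8] $\overline{R[f]}=\bar f\times 1$. - [RD.9] $R[\bar f]=(\bar f\times 1)\pi_1$. A differential restriction category is a Cartesian left additive restriction category with an operation sending each $f:A\to B$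 to $D[f]:A\times A\to B$ (first argument the point, second the direction) such that, for all suitable maps $a,u,v,w$: - [DR.1] $D[0]=0$ and $D[f+g]=D[f]+D[g]$. - [DR.2] $\langle a,v+w\rangle D[f]=\langle a,v\rangle D[f]+\langle a,w\rangle D[f]$ and $\langle a,0\rangle D[f]=\overline{af}\,0$. - [DR.3] $D[1]=\pi_1$, $D[\pi_0]=\pi_1\pi_0$, $D[\pi_1]=\pi_1\pi_1$. - [DR.4] $D[\langle f,g\rangle]=\langle D[f],D[g]\rangle$. - [DR.5] $D[fg]=\langle \pi_0 f,D[f]\rangle D[g]$. - [DR.6] $\langle\langle a,v\rangle,\langle 0,w\rangle\rangle D[D[f]]=\bar v\,\langle a,w\rangle D[f]$. - [DR.7] $\langle\langle a,v\rangle,\langle u,0\rangle\rangle D[D[f]]=\langle\langle a,u\rangle,\langle v,0\rangle\rangle D[D[f]]$. - [DR.8] $\overline{D[f]}=\bar f\times 1$. - [DR.9] $D[\bar f]=(\bar f\times 1)\pi_1$. *)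

(* Defs.v *)
Set Implicit Arguments.
Unset Strict Implicit.

(* The data of a Cartesian left additive restriction category.
   Composition is written in DIAGRAMMATIC order: [comp f g] = "first f, then g". *)
Record ClData : Type := {
  Ob : Type;
  hom : Ob -> Ob -> Type;
  idm : forall A : Ob, hom A A;
  comp : forall A B C : Ob, hom A B -> hom B C -> hom A C;
  rst : forall A B : Ob, hom A B -> hom A A;
  term : Ob;
  bang : forall A : Ob, hom A term;
  prod : Ob -> Ob -> Ob;
  pi0 : forall A B : Ob, hom (prod A B) A;
  pi1 : forall A B : Ob, hom (prod A B) B;
  pair : forall C A B : Ob, hom C A -> hom C B -> hom C (prod A B);
  add : forall A B : Ob, hom A B -> hom A B -> hom A B;
  zero : forall A B : Ob, hom A B
}.

Arguments hom {c} _ _.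
Arguments idm {c} A.
Arguments comp {c A B C} _ _.
Arguments rst {c A B} _.
Arguments term {c}.
Arguments bang {c} A.
Arguments prod {c} _ _.
Arguments pi0 {c A B}.
Arguments pi1 {c A B}.
Arguments pair {c C A B} _ _.
Arguments add {c A B} _ _.
Arguments zero {c A B}.

Declare Scope cat_scope.
Delimit Scope cat_scope with cat.
Notation "f ';;' g" := (comp f g) (at level 40, left associativity) : cat_scope.
Notation "'bar' f" := (rst f) (at level 10) : cat_scope.
Notation "f '+m' g" := (add f g) (at level 50, left associativity) : cat_scope.
Open Scope cat_scope.

Section Derived.
Context {X : ClData}.

Definition total {A B : Ob X} (f : hom A B) : Prop := rst f = idm A.

Definition times {A B A' B' : Ob X} (f : hom A A') (g : hom B B')
  : hom (prod A B) (prod A' B') := pair (pi0 ;; f) (pi1 ;; g).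

Definition iota0 (A B : Ob X) : hom A (prod A B) := pair (idm A) (@zero X A B).
Definition iota1 (A B : Ob X) : hom B (prod A B) := pair (@zero X B A) (idm B).

End Derived.

Record is_CLARC (X : ClData) : Prop := {
  comp_assoc : forall (A B C D : Ob X) (f : hom A B) (g : hom B C) (h : hom C D),
      (f ;; g) ;; h = f ;; (g ;; h);
  comp_id_l : forall (A B : Ob X) (f : hom A B), idm A ;; f = f;
  comp_id_r : forall (A B : Ob X) (f : hom A B), f ;; idm B = f;
  R1 : forall (A B : Ob X) (f : hom A B), bar f ;; f = f;
  R2 : forall (A B C : Ob X) (f : hom A B) (g : hom A C), bar f ;; bar g = bar g ;; bar f;
  R3 : forall (A B C : Ob X) (f : hom A B) (g : hom A C), bar (bar f ;; g) = bar f ;; bar g;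
  R4 : forall (A B C : Ob X) (f : hom A B) (g : hom B C), f ;; bar g = bar (f ;; g) ;; f;
  bang_total : forall A : Ob X, total (bang A);
  term_univ : forall (A : Ob X) (f : hom A term), f = bar f ;; bang A;
  pi0_total : forall A B : Ob X, total (@pi0 X A B);
  pi1_total : forall A B : Ob X, total (@pi1 X A B);
  pair_pi0 : forall (C A B : Ob X) (f : hom C A) (g : hom C B), pair f g ;; pi0 = bar g ;; f;
  pair_pi1 : forall (C A B : Ob X) (f : hom C A) (g : hom C B), pair f g ;; pi1 = bar f ;; g;
  pair_unique : forall (C A B : Ob X) (f : hom C A) (g : hom C B) (h : hom C (prod A B)),
      h ;; pi0 = bar g ;; f -> h ;; pi1 = bar f ;; g -> h = pair f g;
  add_assoc : forall (A B : Ob X) (f g h : hom A B), (f +m g) +m h = f +m (g +m h);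
  add_comm : forall (A B : Ob X) (f g : hom A B), f +m g = g +m f;
  add_zero : forall (A B : Ob X) (f : hom A B), f +m zero = f;
  rst_add : forall (A B : Ob X) (f g : hom A B), bar (f +m g) = bar f ;; bar g;
  rst_zero : forall A B : Ob X, bar (@zero X A B) = idm A;
  comp_add : forall (C A B : Ob X) (x : hom C A) (f g : hom A B), x ;; (f +m g) = (x ;; f) +m (x ;; g);
  comp_zero : forall (C A B : Ob X) (x : hom C A), x ;; (@zero X A B) = bar x ;; zero;
  add_pi0 : forall (C A B : Ob X) (f g : hom C (prod A B)), (f +m g) ;; pi0 = (f ;; pi0) +m (g ;; pi0);
  add_pi1 : forall (C A B : Ob X) (f g : hom C (prod A B)), (f +m g) ;; pi1 = (f ;; pi1) +m (g ;; pi1);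
  zero_pi0 : forall (C A B : Ob X), (@zero X C (prod A B)) ;; pi0 = zero;
  zero_pi1 : forall (C A B : Ob X), (@zero X C (prod A B)) ;; pi1 = zero
}.

Definition RevOp (X : ClData) : Type :=
  forall (A B : Ob X), hom A B -> hom (prod A B) A.

Definition DiffOp (X : ClData) : Type :=
  forall (A B : Ob X), hom A B -> hom (prod A A) B.

Record RD_axioms (X : ClData) (R : RevOp X) : Prop := {
  RD1_add : forall (A B : Ob X) (f g : hom A B), R _ _ (f +m g) = R _ _ f +m R _ _ g;
  RD1_zero : forall (A B : Ob X), R _ _ (@zero X A B) = zero;
  RD2_add : forall (C A B : Ob X) (f : hom A B) (a : hom C A) (b c : hom C B),
      pair a (b +m c) ;; R _ _ f = (pair a b ;; R _ _ f) +m (pair a c ;; R _ _ f);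
  RD2_zero : forall (C A B : Ob X) (f : hom A B) (a : hom C A),
      pair a zero ;; R _ _ f = bar (a ;; f) ;; (@zero X C A);
  RD3_0 : forall (A B : Ob X), R _ _ (@pi0 X A B) = pi1 ;; iota0 A B;
  RD3_1 : forall (A B : Ob X), R _ _ (@pi1 X A B) = pi1 ;; iota1 A B;
  RD4 : forall (C A B : Ob X) (f : hom C A) (g : hom C B),
      R _ _ (pair f g) = (times (idm C) pi0 ;; R _ _ f) +m (times (idm C) pi1 ;; R _ _ g);
  RD5 : forall (A B C : Ob X) (f : hom A B) (g : hom B C),
      R _ _ (f ;; g) = pair pi0 (pair (pi0 ;; f) pi1 ;; R _ _ g) ;; R _ _ f;
  RD6 : forall (A B : Ob X) (f : hom A B),
      pair (times (idm A) (@pi0 X B B)) (times (@zero X A A) (@pi1 X B B))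
        ;; times (iota0 (prod A B) A) (idm (prod A B))
        ;; R _ _ (R _ _ (R _ _ f)) ;; pi1
      = times (idm A) (@pi1 X B B) ;; R _ _ f;
  RD7 : forall (A B : Ob X) (f : hom A B),
      let g := times (iota0 A B) (idm A) ;; R _ _ (R _ _ f) ;; pi1 in
      let ex := pair (times (@pi0 X A A) (@pi0 X A A)) (times (@pi1 X A A) (@pi1 X A A)) in
      times (iota0 (prod A A) B) (idm (prod A A)) ;; R _ _ (R _ _ g) ;; pi1
      = ex ;; times (iota0 (prod A A) B) (idm (prod A A)) ;; R _ _ (R _ _ g) ;; pi1;
  RD8 : forall (A B : Ob X) (f : hom A B), bar (R _ _ f) = times (bar f) (idm B);
  RD9 : forall (A B : Ob X) (f : hom A B), R _ _ (bar f) = times (bar f) (idm A) ;; pi1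
}.

Record DR_axioms (X : ClData) (D : DiffOp X) : Prop := {
  DR1_zero : forall (A B : Ob X), D _ _ (@zero X A B) = zero;
  DR1_add : forall (A B : Ob X) (f g : hom A B), D _ _ (f +m g) = D _ _ f +m D _ _ g;
  DR2_add : forall (C A B : Ob X) (f : hom A B) (a v w : hom C A),
      pair a (v +m w) ;; D _ _ f = (pair a v ;; D _ _ f) +m (pair a w ;; D _ _ f);
  DR2_zero : forall (C A B : Ob X) (f : hom A B) (a : hom C A),
      pair a zero ;; D _ _ f = bar (a ;; f) ;; (@zero X C B);
  DR3_id : forall (A : Ob X), D _ _ (idm A) = pi1;
  DR3_pi0 : forall (A B : Ob X), D _ _ (@pi0 X A B) = pi1 ;; pi0;
  DR3_pi1 : forall (A B : Ob X), D _ _ (@pi1 X A B) = pi1 ;; pi1;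
  DR4 : forall (C A B : Ob X) (f : hom C A) (g : hom C B),
      D _ _ (pair f g) = pair (D _ _ f) (D _ _ g);
  DR5 : forall (A B C : Ob X) (f : hom A B) (g : hom B C),
      D _ _ (f ;; g) = pair (pi0 ;; f) (D _ _ f) ;; D _ _ g;
  DR6 : forall (C A B : Ob X) (f : hom A B) (a v w : hom C A),
      pair (pair a v) (pair zero w) ;; D _ _ (D _ _ f) = bar v ;; pair a w ;; D _ _ f;
  DR7 : forall (C A B : Ob X) (f : hom A B) (a u v : hom C A),
      pair (pair a v) (pair u zero) ;; D _ _ (D _ _ f)
      = pair (pair a u) (pair v zero) ;; D _ _ (D _ _ f);
  DR8 : forall (A B : Ob X) (f : hom A B), bar (D _ _ f) = times (bar f) (idm A);
  DR9 : forall (A B : Ob X) (f : hom A B), D _ _ (bar f) = times (bar f) (idm A) ;; pi1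
}.

Definition is_RDRC (X : ClData) (R : RevOp X) : Prop := is_CLARC X /\ RD_axioms R.

Definition is_DRC (X : ClData) (D : DiffOp X) : Prop := is_CLARC X /\ DR_axioms D.

Definition D_of_R (X : ClData) (R : RevOp X) : DiffOp X :=
  fun (A B : Ob X) (f : hom A B) =>
    times (iota0 A B) (idm A) ;; R _ _ (R _ _ f) ;; pi1.

(* Main.v *)
Require Import Defs.
From Corelib Require Import ssreflect.

Section Proof.
Variable X : ClData.
Variable R : RevOp X.
Hypothesis H : is_CLARC X.
Hypothesis HR : RD_axioms R.

Local Notation RR f := (R _ _ f).
Local Notation DD f := (@D_of_R X R _ _ f).

Definition le {A B : Ob X} (u K : hom A B) := bar u ;; K = u.

Lemma assoc {A B C D : Ob X} (f : hom A B) (g : hom B C) (h : hom C D) :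
  f ;; g ;; h = f ;; (g ;; h).
Proof. exact (comp_assoc H f g h). Qed.
Lemma idl {A B : Ob X} (f : hom A B) : idm A ;; f = f.
Proof. apply (comp_id_l H). Qed.
Lemma idr {A B : Ob X} (f : hom A B) : f ;; idm B = f.
Proof. apply (comp_id_r H). Qed.
Lemma r1 {A B : Ob X} (f : hom A B) : bar f ;; f = f.
Proof. apply (R1 H). Qed.
Lemma rC {A B C : Ob X} (f : hom A B) (g : hom A C) : bar f ;; bar g = bar g ;; bar f.
Proof. apply (R2 H). Qed.
Lemma r3 {A B C : Ob X} (f : hom A B) (g : hom A C) : bar (bar f ;; g) = bar f ;; bar g.
Proof. apply (R3 H). Qed.
Lemma r4 {A B C : Ob X} (f : hom A B) (g : hom B C) : f ;; bar g = bar (f ;; g) ;; f.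
Proof. apply (R4 H). Qed.

Lemma rst_id (A : Ob X) : bar (idm A) = idm A.
Proof. have h := r1 (idm A). by rewrite idr in h. Qed.
Lemma rst_rst {A B : Ob X} (f : hom A B) : bar (bar f) = bar f.
Proof. have h := r3 f (idm A). by rewrite !idr rst_id idr in h. Qed.
Lemma rst_idem {A B : Ob X} (f : hom A B) : bar f ;; bar f = bar f.
Proof. have h := r1 (bar f). by rewrite rst_rst in h. Qed.
Lemma rst_le1 {A B C : Ob X} (f : hom A B) (g : hom B C) : bar (f ;; g) ;; bar f = bar (f ;; g).
Proof. by rewrite rC -r3 -assoc r1. Qed.
Lemma rst_le2 {A B C : Ob X} (f : hom A B) (g : hom B C) : bar f ;; bar (f ;; g) = bar (f ;; g).
Proof. by rewrite rC rst_le1. Qed.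
Lemma rst_cr {A B C : Ob X} (f : hom A B) (g : hom B C) : bar (f ;; bar g) = bar (f ;; g).
Proof. by rewrite r4 r3 rst_le1. Qed.
Lemma rst_total {A B C : Ob X} (f : hom A B) (g : hom B C) : total g -> bar (f ;; g) = bar f.
Proof. move=> hg. by rewrite -rst_cr hg idr. Qed.
Lemma rst_absorb {A B C : Ob X} (e : hom A C) (u : hom A B) : bar u ;; bar e = bar u -> bar e ;; u = u.
Proof. move=> h. by rewrite -{2}(r1 u) -h rC assoc r1. Qed.
Lemma comp_total {A B C : Ob X} (f : hom A B) (g : hom B C) : total f -> total g -> total (f ;; g).
Proof. rewrite /total => hf hg. by rewrite rst_total. Qed.

Lemma ppi0 {C A B : Ob X} (f : hom C A) (g : hom C B) : pair f g ;; pi0 = bar g ;; f.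
Proof. apply (pair_pi0 H). Qed.
Lemma ppi1 {C A B : Ob X} (f : hom C A) (g : hom C B) : pair f g ;; pi1 = bar f ;; g.
Proof. apply (pair_pi1 H). Qed.
Lemma p0tot {A B : Ob X} : bar (@pi0 X A B) = idm _.
Proof. apply (pi0_total H). Qed.
Lemma p1tot {A B : Ob X} : bar (@pi1 X A B) = idm _.
Proof. apply (pi1_total H). Qed.
Lemma rst_p0 {A B C : Ob X} (f : hom C (prod A B)) : bar (f ;; pi0) = bar f.
Proof. apply: rst_total. exact: p0tot. Qed.
Lemma rst_p1 {A B C : Ob X} (f : hom C (prod A B)) : bar (f ;; pi1) = bar f.
Proof. apply: rst_total. exact: p1tot. Qed.
Lemma rst_pair {C A B : Ob X} (f : hom C A) (g : hom C B) : bar (pair f g) = bar f ;; bar g.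
Proof. by rewrite -rst_p0 ppi0 r3 rC. Qed.
Lemma pair_eta {C A B : Ob X} (h : hom C (prod A B)) : pair (h ;; pi0) (h ;; pi1) = h.
Proof.
  symmetry; apply: (pair_unique H).
  - by rewrite rst_p1 -assoc r1.
  - by rewrite rst_p0 -assoc r1.
Qed.
Lemma pair_id {A B : Ob X} : pair (@pi0 X A B) pi1 = idm _.
Proof. by rewrite -(pair_eta (idm _)) !idl. Qed.
Lemma pair_comp {D C A B : Ob X} (x : hom D C) (f : hom C A) (g : hom C B) :
  x ;; pair f g = pair (x ;; f) (x ;; g).
Proof.
  apply: (pair_unique H).
  - by rewrite assoc ppi0 -assoc r4 assoc.
  - by rewrite assoc ppi1 -assoc r4 assoc.
Qed.
Lemma zero_tot {A B : Ob X} : bar (@zero X A B) = idm A.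
Proof. apply (rst_zero H). Qed.
Lemma comp0 {C A B : Ob X} (x : hom C A) : x ;; (@zero X A B) = bar x ;; zero.
Proof. apply (comp_zero H). Qed.

Lemma pair_rst_l {E C A B : Ob X} (e : hom C E) (f : hom C A) (g : hom C B) :
  pair (bar e ;; f) g = bar e ;; pair f g.
Proof.
  symmetry; apply: (pair_unique H).
  - by rewrite assoc ppi0 -!assoc (rC g e).
  - by rewrite assoc ppi1 r3 assoc.
Qed.
Lemma pair_rst_r {E C A B : Ob X} (e : hom C E) (f : hom C A) (g : hom C B) :
  pair f (bar e ;; g) = bar e ;; pair f g.
Proof.
  symmetry; apply: (pair_unique H).
  - by rewrite assoc ppi0 r3 assoc.
  - by rewrite assoc ppi1 -!assoc (rC f e).
Qed.

Lemma add0l {A B : Ob X} (f : hom A B) : zero +m f = f.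
Proof. by rewrite (add_comm H) (add_zero H). Qed.

Lemma le_refl {A B : Ob X} (u : hom A B) : le u u.
Proof. exact: r1. Qed.
Lemma le_rst {E A B : Ob X} (e : hom A E) (K : hom A B) : le (bar e ;; K) K.
Proof. by rewrite /le r3 assoc r1. Qed.
Lemma le_trans {A B : Ob X} {u w K : hom A B} : le u w -> le w K -> le u K.
Proof.
  rewrite /le => hu hw.
  have e : bar u ;; bar w = bar u by rewrite -r3 hu.
  by rewrite -e assoc hw hu.
Qed.
Lemma le_eq {A B : Ob X} {K : hom A B} (u w : hom A B) : le u K -> le w K -> bar u = bar w -> u = w.
Proof. rewrite /le => hu hw e. by rewrite -hu -hw e. Qed.
Lemma eq_le {A B : Ob X} (u K : hom A B) : u = K -> le u K.
Proof. move=> ->; exact: le_refl. Qed.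
Lemma le_compl {C A B : Ob X} (x : hom C A) (u K : hom A B) : le u K -> le (x ;; u) (x ;; K).
Proof. rewrite /le => hu. by rewrite -assoc -r4 assoc hu. Qed.
Lemma le_compr {C A B : Ob X} (u K : hom C A) (g : hom A B) : le u K -> le (u ;; g) (K ;; g).
Proof.
  rewrite /le => hu. rewrite -(rst_le1 u g) assoc -(assoc (bar u) K g) hu.
  exact: r1.
Qed.
Lemma le_pair {C A B : Ob X} (u K : hom C A) (v L : hom C B) :
  le u K -> le v L -> le (pair u v) (pair K L).
Proof.
  rewrite /le => hu hv. by rewrite rst_pair assoc -pair_rst_r hv -pair_rst_l hu.
Qed.
Lemma le_add {A B : Ob X} (u K v L : hom A B) : le u K -> le v L -> le (u +m v) (K +m L).
Proof.
  rewrite /le => hu hv. rewrite (rst_add H).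
  transitivity (bar u ;; bar v ;; (u +m v)); last by rewrite -(rst_add H) r1.
  rewrite !(comp_add H). congr (_ +m _).
  - by rewrite (rC u v) !assoc hu r1.
  - by rewrite !assoc hv r1.
Qed.
Lemma le_zero {C A B : Ob X} (x : hom C A) : le (x ;; @zero X A B) zero.
Proof. rewrite comp0; exact: le_rst. Qed.
Lemma le_pi0 {C A B : Ob X} (s : hom C A) (t : hom C B) : le (pair s t ;; pi0) s.
Proof. rewrite ppi0; exact: le_rst. Qed.
Lemma le_pi1 {C A B : Ob X} (s : hom C A) (t : hom C B) : le (pair s t ;; pi1) t.
Proof. rewrite ppi1; exact: le_rst. Qed.
Lemma le_zero_add {A B : Ob X} (z w K : hom A B) : le z zero -> le w K -> le (z +m w) K.
Proof.
  move=> hz hw. rewrite -(add0l K). exact: le_add.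
Qed.
Lemma le_times {C A B A' B' : Ob X} (s : hom C A) (t : hom C B) (f : hom A A') (g : hom B B') :
  le (pair s t ;; times f g) (pair (s ;; f) (t ;; g)).
Proof.
  rewrite /times pair_comp -!assoc. apply: le_pair; apply: le_compr; [exact: le_pi0 | exact: le_pi1].
Qed.

Lemma pair_total {C A B : Ob X} (f : hom C A) (g : hom C B) : total f -> total g -> total (pair f g).
Proof. rewrite /total rst_pair => -> ->. exact: idl. Qed.
Lemma times_total {A B A' B' : Ob X} (f : hom A A') (g : hom B B') : total f -> total g -> total (times f g).
Proof.
  move=> hf hg. apply: pair_total; apply: comp_total => //; [exact: p0tot | exact: p1tot].
Qed.
Lemma id_total (A : Ob X) : total (idm A).
Proof. exact: rst_id. Qed.
Lemma times_rst_id {A B E : Ob X} (e : hom A E) : times (bar e) (idm B) = bar (pi0 ;; e).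
Proof. by rewrite /times r4 pair_rst_l idr pair_id idr. Qed.

Lemma iota0_total (A B : Ob X) : total (iota0 A B).
Proof. apply: pair_total; [exact: id_total | exact: zero_tot]. Qed.
Lemma iota1_total (A B : Ob X) : total (iota1 A B).
Proof. apply: pair_total; [exact: zero_tot | exact: id_total]. Qed.
Lemma x_total (A B : Ob X) : total (times (iota0 A B) (idm A)).
Proof. apply: times_total; [exact: iota0_total | exact: id_total]. Qed.
Lemma i0p0 (A B : Ob X) : iota0 A B ;; pi0 = idm A.
Proof. by rewrite /iota0 ppi0 zero_tot idl. Qed.
Lemma i0p1 (A B : Ob X) : iota0 A B ;; pi1 = zero.
Proof. by rewrite /iota0 ppi1 rst_id idl. Qed.
Lemma i1p1 (A B : Ob X) : iota1 A B ;; pi1 = idm B.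
Proof. by rewrite /iota1 ppi1 zero_tot idl. Qed.
Lemma x_p1 (A B : Ob X) : times (iota0 A B) (idm A) ;; pi1 = pi1.
Proof. by rewrite /times ppi1 (rst_total _ _ (iota0_total A B)) p0tot idl idr. Qed.
Lemma a_iota0 {C A B : Ob X} (a : hom C A) : a ;; iota0 A B = pair a zero.
Proof.
  apply: (le_eq (K := pair a zero)); last first.
  - by rewrite (rst_total _ _ (iota0_total A B)) rst_pair zero_tot idr.
  - exact: le_refl.
  - rewrite /iota0 pair_comp idr. apply: le_pair; [exact: le_refl | exact: le_zero].
Qed.
Lemma pair_x {C A B : Ob X} (a v : hom C A) :
  pair a v ;; times (iota0 A B) (idm A) = pair (pair a zero) v.
Proof.
  apply: (le_eq (K := pair (pair a zero) v)); last first.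
  - by rewrite (rst_total _ _ (x_total A B)) !rst_pair zero_tot idr.
  - exact: le_refl.
  - apply: le_trans; first exact: le_times.
    rewrite a_iota0 idr. exact: le_refl.
Qed.
Lemma EV {C A B : Ob X} (f : hom A B) (a v : hom C A) :
  pair a v ;; DD f = pair (pair a zero) v ;; RR (RR f) ;; pi1.
Proof. by rewrite /D_of_R -!assoc pair_x. Qed.
Lemma Dform {A B : Ob X} (f : hom A B) :
  DD f = pair (pair pi0 zero) pi1 ;; RR (RR f) ;; pi1.
Proof. by rewrite -(idl (DD f)) -pair_id EV. Qed.

Lemma rd8 {A B : Ob X} (f : hom A B) : bar (RR f) = bar (pi0 ;; f).
Proof. by rewrite (RD8 HR) times_rst_id. Qed.
Lemma rst_pR {C A B : Ob X} (p : hom C A) (q : hom C B) (f : hom A B) :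
  bar (pair p q ;; RR f) = bar (p ;; f) ;; bar q.
Proof.
  by rewrite -(rst_cr (pair p q) (RR f)) rd8 rst_cr -assoc ppi0 assoc r3 rC.
Qed.
Lemma rst_D {A B : Ob X} (f : hom A B) : bar (DD f) = bar (pi0 ;; f).
Proof.
  rewrite /D_of_R rst_p1 -rst_cr rd8 rst_cr -assoc.
  rewrite /times ppi0 idr p1tot idl a_iota0 rst_pR zero_tot idr //.
Qed.
Lemma rst_pD {C A B : Ob X} (p : hom C A) (q : hom C A) (f : hom A B) :
  bar (pair p q ;; DD f) = bar (p ;; f) ;; bar q.
Proof.
  by rewrite -(rst_cr (pair p q) (DD f)) rst_D rst_cr -assoc ppi0 assoc r3 rC.
Qed.

Lemma R_id (A : Ob X) : RR (idm A) = pi1.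
Proof.
  have e : RR (idm A) = RR (bar (idm A)) by rewrite rst_id.
  by rewrite e (RD9 HR) rst_id /times !idr pair_id idl.
Qed.
Lemma R_iota0 (A B : Ob X) : RR (iota0 A B) = pi1 ;; pi0.
Proof.
  rewrite /iota0 (RD4 HR) R_id (RD1_zero HR) comp0.
  rewrite (times_total _ _ (id_total A) p1tot) idl (add_zero H).
  by rewrite /times ppi1 idr p0tot idl.
Qed.
Lemma R_iota1 (A B : Ob X) : RR (iota1 A B) = pi1 ;; pi1.
Proof.
  rewrite /iota1 (RD4 HR) R_id (RD1_zero HR) comp0.
  rewrite (times_total _ _ (id_total B) p0tot) idl add0l.
  by rewrite /times ppi1 idr p0tot idl.
Qed.

Lemma dr1_zero (A B : Ob X) : DD (@zero X A B) = zero.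
Proof. by rewrite /D_of_R !(RD1_zero HR) assoc (zero_pi1 H) comp0 (x_total A B) idl. Qed.
Lemma dr1_add (A B : Ob X) (f g : hom A B) : DD (f +m g) = DD f +m DD g.
Proof. by rewrite /D_of_R !(RD1_add HR) (comp_add H) (add_pi1 H). Qed.
Lemma dr2_add (C A B : Ob X) (f : hom A B) (a v w : hom C A) :
  pair a (v +m w) ;; DD f = (pair a v ;; DD f) +m (pair a w ;; DD f).
Proof. by rewrite !EV (RD2_add HR) (add_pi1 H). Qed.
Lemma dr2_zero (C A B : Ob X) (f : hom A B) (a : hom C A) :
  pair a zero ;; DD f = bar (a ;; f) ;; (@zero X C B).
Proof. by rewrite EV (RD2_zero HR) assoc (zero_pi1 H) rst_pR zero_tot idr. Qed.
Lemma dr3_id (A : Ob X) : DD (idm A) = pi1.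
Proof. by rewrite /D_of_R R_id (RD3_1 HR) !assoc i1p1 idr x_p1. Qed.
Lemma dr3_pi0 (A B : Ob X) : DD (@pi0 X A B) = pi1 ;; pi0.
Proof.
  rewrite /D_of_R (RD3_0 HR) (RD5 HR) (RD3_1 HR) R_iota0 !assoc i1p1 idr ppi1 p0tot idl.
  by rewrite -(assoc (pair _ _) pi1 pi0) ppi1 rst_p1 p0tot idl -assoc x_p1.
Qed.
Lemma dr3_pi1 (A B : Ob X) : DD (@pi1 X A B) = pi1 ;; pi1.
Proof.
  rewrite /D_of_R (RD3_1 HR) (RD5 HR) (RD3_1 HR) R_iota1 !assoc i1p1 idr ppi1 p0tot idl.
  by rewrite -(assoc (pair _ _) pi1 pi1) ppi1 rst_p1 p0tot idl -assoc x_p1.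
Qed.
Lemma dr8 (A B : Ob X) (f : hom A B) : bar (DD f) = times (bar f) (idm A).
Proof. by rewrite rst_D times_rst_id. Qed.

Lemma RD5_le {C A B D : Ob X} (h : hom A B) (k : hom B D) (s : hom C A) (t : hom C D) :
  le (pair s t ;; RR (h ;; k)) (pair s (pair (s ;; h) t ;; RR k) ;; RR h).
Proof.
  rewrite (RD5 HR) -assoc. apply: le_compr. rewrite pair_comp.
  apply: le_pair; first exact: le_pi0.
  rewrite -assoc. apply: le_compr. rewrite pair_comp.
  apply: le_pair; last exact: le_pi1.
  rewrite -assoc. apply: le_compr. exact: le_pi0.
Qed.

Lemma dr5 (A B C : Ob X) (f : hom A B) (g : hom B C) :
  DD (f ;; g) = pair (pi0 ;; f) (DD f) ;; DD g.
Proof.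
  apply: (le_eq (K := pair (pi0 ;; f) (DD f) ;; DD g));
    [ | exact: le_refl | by rewrite rst_D rst_pD rst_D -assoc rst_le1].
  rewrite Dform (RD5 HR f g).
  set m := pair (pi0 ;; f) pi1 ;; RR g.
  set P := pair (@pi0 X A A) (@zero X _ C).
  apply: le_trans; first (apply: le_compr; exact: RD5_le).
  apply: (le_trans (w := pair P (pair (pair pi0 zero) pi1 ;; RR (RR f)) ;; RR (pair pi0 m) ;; pi1)).
  { apply: le_compr. apply: le_compr. apply: le_pair; first exact: le_refl.
    apply: le_compr. apply: le_pair; last exact: le_refl.
    rewrite /P pair_comp. apply: le_pair; first exact: le_pi0.
    rewrite /m -assoc pair_comp -assoc ppi0 zero_tot idl ppi1 p0tot idl (RD2_zero HR).
    exact: le_rst. }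
  rewrite (RD4 HR) (comp_add H) (add_pi1 H).
  apply: le_zero_add.
  { rewrite (RD3_0 HR) !assoc i0p1 -!assoc. exact: le_zero. }
  rewrite -assoc.
  apply: (le_trans (w := pair P (DD f) ;; RR m ;; pi1)).
  { apply: le_compr. apply: le_compr. apply: le_trans; first exact: le_times.
    rewrite idr -Dform. exact: le_refl. }
  rewrite /m.
  apply: le_trans; first (apply: le_compr; exact: RD5_le).
  apply: (le_trans (w := pair P (pair (pair (pi0 ;; f) zero) (DD f) ;; RR (RR g)) ;; RR (pair (pi0 ;; f) pi1) ;; pi1)).
  { apply: le_compr. apply: le_compr. apply: le_pair; first exact: le_refl.
    apply: le_compr. apply: le_pair; last exact: le_refl.
    rewrite pair_comp. apply: le_pair; last exact: le_pi1.
    rewrite -assoc. apply: le_compr. exact: le_pi0. }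
  rewrite (RD4 HR) (comp_add H) (add_pi1 H).
  apply: le_zero_add.
  { rewrite (RD5 HR pi0 f) (RD3_0 HR) !assoc i0p1 -!assoc. exact: le_zero. }
  rewrite (RD3_1 HR) !assoc i1p1 idr -assoc.
  apply: le_trans; first (apply: le_compr; exact: le_times).
  apply: le_trans; first exact: le_pi1.
  rewrite -EV. exact: le_refl.
Qed.

Lemma dr9 (A B : Ob X) (f : hom A B) : DD (bar f) = times (bar f) (idm A) ;; pi1.
Proof.
  apply: (le_eq (K := pi1));
    [ | by rewrite times_rst_id; exact: le_rst | by rewrite rst_D rst_p1 times_rst_id rst_rst rst_cr].
  rewrite /D_of_R (RD9 HR) times_rst_id (RD5 HR) (RD9 HR) times_rst_id !assoc.
  apply: le_trans; first (apply: le_compl; apply: le_compl; exact: le_rst).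
  apply: (le_trans (w := times (iota0 A A) (idm A) ;; pi1)); last by rewrite x_p1; exact: le_refl.
  apply: le_compl. rewrite -assoc.
  apply: le_trans; first (apply: le_compr; exact: le_pi1).
  rewrite (RD3_1 HR) !assoc i1p1 idr. exact: le_pi1.
Qed.

Lemma dr4_0 (C A B : Ob X) (f : hom C A) (g : hom C B) :
  DD (pair f g) ;; pi0 = bar (DD g) ;; DD f.
Proof.
  have S1 : DD (pair f g ;; pi0) = DD (pair f g) ;; pi0.
  { apply: (le_eq (K := DD (pair f g) ;; pi0));
      [ | exact: le_refl | by rewrite rst_D rst_p0 rst_D -assoc rst_p0].
    rewrite dr5 dr3_pi0 -assoc. apply: le_compr. exact: le_pi1. }
  rewrite -S1 ppi0.
  apply: (le_eq (K := DD f)); [ | exact: le_rst | ].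
  - rewrite dr5 -{2}(idl (DD f)) -pair_id. apply: le_compr. apply: le_pair.
    + rewrite r4. exact: le_rst.
    + rewrite dr9 times_rst_id. exact: le_rst.
  - by rewrite r3 !rst_D -assoc r4 assoc r3.
Qed.
Lemma dr4_1 (C A B : Ob X) (f : hom C A) (g : hom C B) :
  DD (pair f g) ;; pi1 = bar (DD f) ;; DD g.
Proof.
  have S1 : DD (pair f g ;; pi1) = DD (pair f g) ;; pi1.
  { apply: (le_eq (K := DD (pair f g) ;; pi1));
      [ | exact: le_refl | by rewrite rst_D rst_p1 rst_D -assoc rst_p1].
    rewrite dr5 dr3_pi1 -assoc. apply: le_compr. exact: le_pi1. }
  rewrite -S1 ppi1.
  apply: (le_eq (K := DD g)); [ | exact: le_rst | ].
  - rewrite dr5 -{2}(idl (DD g)) -pair_id. apply: le_compr. apply: le_pair.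
    + rewrite r4. exact: le_rst.
    + rewrite dr9 times_rst_id. exact: le_rst.
  - by rewrite r3 !rst_D -assoc r4 assoc r3.
Qed.
Lemma dr4 (C A B : Ob X) (f : hom C A) (g : hom C B) :
  DD (pair f g) = pair (DD f) (DD g).
Proof. apply: (pair_unique H); [exact: dr4_0 | exact: dr4_1]. Qed.

Lemma pair_zero {C A B : Ob X} : pair (@zero X C A) (@zero X C B) = zero.
Proof. symmetry; apply: (pair_unique H); by rewrite ?(zero_pi0 H) ?(zero_pi1 H) zero_tot idl. Qed.

Lemma D_iota0 (A B : Ob X) : DD (iota0 A B) = pi1 ;; iota0 A B.
Proof. by rewrite {1}/iota0 dr4 dr3_id dr1_zero a_iota0. Qed.

Lemma Dx_le (A B : Ob X) :
  le (DD (times (iota0 A B) (idm A))) (pi1 ;; times (iota0 A B) (idm A)).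
Proof.
  rewrite {1}/times dr4 /times pair_comp. apply: le_pair.
  - rewrite dr5 dr3_pi0 D_iota0 -assoc -(assoc pi1 pi0). apply: le_compr. exact: le_pi1.
  - rewrite !idr dr3_pi1. exact: le_refl.
Qed.

Lemma RD6_le {C A B : Ob X} (g : hom A B) (s : hom C A) (t u : hom C B) :
  le (pair (pair s t) (pair zero u) ;; DD (RR g)) (pair s u ;; RR g).
Proof.
  have TOT : total (pair (times (idm A) (@pi0 X B B)) (times (@zero X A A) (@pi1 X B B))).
  { apply: pair_total; apply: times_total;
      [exact: id_total | exact: p0tot | exact: zero_tot | exact: p1tot]. }
  have E : pair s (pair t u) ;; pair (times (idm A) (@pi0 X B B)) (times (@zero X A A) (@pi1 X B B))
           = pair (pair s t) (pair zero u).
  { apply: (le_eq (K := pair (pair s t) (pair zero u)));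
      [ | exact: le_refl | by rewrite (rst_total _ _ TOT) !rst_pair zero_tot idl assoc].
    rewrite pair_comp. apply: le_pair.
    - apply: le_trans; first exact: le_times. apply: le_pair; [rewrite idr; exact: le_refl | exact: le_pi0].
    - apply: le_trans; first exact: le_times. apply: le_pair; [exact: le_zero | exact: le_pi1]. }
  have E6 := RD6 HR g. rewrite !assoc in E6.
  rewrite -E /D_of_R !assoc E6 -assoc. apply: le_compr.
  apply: le_trans; first exact: le_times. apply: le_pair; [rewrite idr; exact: le_refl | exact: le_pi1].
Qed.

Lemma dr6 (C A B : Ob X) (f : hom A B) (a v w : hom C A) :
  pair (pair a v) (pair zero w) ;; DD (DD f) = bar v ;; pair a w ;; DD f.
Proof.
  apply: (le_eq (K := pair a w ;; DD f)); [ | by rewrite assoc; exact: le_rst | ].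
  - set q := pair (pair a v) (pair zero w).
    have e : DD (DD f) = DD (times (iota0 A B) (idm A) ;; RR (RR f) ;; pi1) by [].
    rewrite e dr5 dr3_pi1 dr5.
    rewrite -(assoc q) -(assoc (q ;; _)).
    apply: le_trans; first (apply: le_compr; rewrite pair_comp; exact: le_pi1).
    rewrite -(assoc q) pair_comp.
    apply: (le_trans (w := pair (pair (pair a zero) v) (pair zero w) ;; DD (RR (RR f)) ;; pi1)).
    { apply: le_compr. apply: le_compr. apply: le_pair.
      - rewrite -assoc. apply: le_trans; first (apply: le_compr; exact: le_pi0).
        rewrite pair_x. exact: le_refl.
      - apply: le_trans; first (apply: le_compl; exact: Dx_le).
        rewrite -assoc. apply: le_trans; first (apply: le_compr; exact: le_pi1).
        rewrite pair_x pair_zero. exact: le_refl. }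
    apply: le_trans; first (apply: le_compr; exact: RD6_le).
    rewrite -EV. exact: le_refl.
  - rewrite rst_pD rst_pD rst_pair zero_tot idl (assoc (bar v)) r3 rst_pD.
    by rewrite -assoc (rC v (a ;; f)).
Qed.

Lemma exq {C A : Ob X} (a u v : hom C A) :
  pair (pair a v) (pair u (@zero X C A)) ;; pair (times (@pi0 X A A) pi0) (times (@pi1 X A A) pi1)
  = pair (pair a u) (pair v (@zero X C A)).
Proof.
  have TOT : total (pair (times (@pi0 X A A) (@pi0 X A A)) (times (@pi1 X A A) (@pi1 X A A))).
  { apply: pair_total; apply: times_total; [exact: p0tot | exact: p0tot | exact: p1tot | exact: p1tot]. }
  apply: (le_eq (K := pair (pair a u) (pair v (@zero X C A)))); [ | exact: le_refl | ].
  - rewrite pair_comp. apply: le_pair; (apply: le_trans; first exact: le_times);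
      apply: le_pair; first [exact: le_pi0 | exact: le_pi1].
  - rewrite (rst_total _ _ TOT) !rst_pair zero_tot !idr !assoc.
    by rewrite (rC v u).
Qed.

Lemma dr7 (C A B : Ob X) (f : hom A B) (a u v : hom C A) :
  pair (pair a v) (pair u zero) ;; DD (DD f) = pair (pair a u) (pair v zero) ;; DD (DD f).
Proof.
  have E7 : DD (DD f) = pair (times (@pi0 X A A) pi0) (times (@pi1 X A A) pi1) ;; DD (DD f).
  { have h := RD7 HR f. simpl in h. rewrite /D_of_R. rewrite !assoc in h. rewrite !assoc. exact: h. }
  by rewrite {1}E7 -assoc exq.
Qed.

Theorem main : is_DRC (D_of_R R).
Proof.
  split; first exact: H.
  split.
  - exact: dr1_zero.
  - exact: dr1_add.
  - exact: dr2_add.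
  - exact: dr2_zero.
  - exact: dr3_id.
  - exact: dr3_pi0.
  - exact: dr3_pi1.
  - exact: dr4.
  - exact: dr5.
  - exact: dr6.
  - exact: dr7.
  - exact: dr8.
  - exact: dr9.
Qed.

End Proof.

Theorem mainTheorem1 (X : ClData) (R : RevOp X) :
  is_RDRC R -> is_DRC (D_of_R R).
Proof. move=> [H HR]. exact: main. Qed.
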